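(* A metric formula $\varphi$ is an $\mathrm{MHT}_f$-tautology iff $\sigma(\varphi)$ is an $\mathrm{MHT}_f$-tautology.
   Context: Metric formulas over $\mathcal{A}$: $\varphi ::= p \mid \bot \mid \varphi_1\otimes\varphi_2 \mid \bullet_I\varphi \mid \varphi_1\,\mathsf{S}_I\,\varphi_2 \mid \varphi_1\,\mathsf{T}_I\,\varphi_2 \mid \bigcirc_I\varphi \mid \varphi_1\,\mathsf{U}_I\,\varphi_2 \mid \varphi_1\,\mathsf{R}_I\,\varphi_2$, $\otimes\in\{\to,\wedge,\vee\}$, $I=[m,n)$, $m\in\mathbb{N}$, $n\in\mathbb{N}\cup\{\omega\}$. Derived: $\neg\varphi=\varphi\to\bot$, $\top=\neg\bot$, $\blacksquare_I\varphi=\bot\,\mathsf{T}_I\,\varphi$ (always before), ''eventually before'' $=\top\,\mathsf{S}_I\,\varphi$, $\widehat{\bullet}_I\varphi=\bullet_I\varphi\vee\neg\bullet_I\top$, $\Box_I\varphi=\bot\,\mathsf{R}_I\,\varphi$, $\Diamond_I\varphi=\top\,\mathsf{U}_I\,\varphi$, $\widehat{\bigcirc}_I\varphi=\bigcirc_I\varphi\vee\neg\bigcirc_I\top$. Timed HT-traces $(\langle\mathbf{H},\mathbf{T}\rangle,\tau)$ of length $\lambda$: $H_i\subseteq T_i\subseteq\mathcal{A}$ for $i\in[0,\lambda)$, $\tau:[0,\lambda)\to\mathbb{N}$, $\tau(0)=0$, $\tau(i)\le\tau(i+1)$. Satisfaction at $k$: $\bot$ never; $p$ iff $p\in H_k$;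 $\wedge,\vee$ usual; $\varphi\to\psi$ iff for both $\mathbf{M}'=\mathbf{M}$ and $\mathbf{M}'=(\langle\mathbf{T},\mathbf{T}\rangle,\tau)$, $\mathbf{M}',k\not\models\varphi$ or $\mathbf{M}',k\models\psi$; $\bullet_I\varphi$: $k>0$, $\varphi$ at $k-1$, $\tau(k)-\tau(k-1)\in I$; $\varphi\,\mathsf{S}_I\,\psi$: some $j\in[0,k]$ with $\tau(k)-\tau(j)\in I$, $\psi$ at $j$, $\varphi$ at all $i\in(j,k]$; $\varphi\,\mathsf{T}_I\,\psi$: for all $j\in[0,k]$ with $\tau(k)-\tau(j)\in I$, $\psi$ at $j$ or $\varphi$ at some $i\in(j,k]$; $\bigcirc_I\varphi$: $k+1<\lambda$, $\varphi$ at $k+1$, $\tau(k+1)-\tau(k)\in I$; $\varphi\,\mathsf{U}_I\,\psi$: some $j\in[k,\lambda)$ with $\tau(j)-\tau(k)\in I$, $\psi$ at $j$, $\varphi$ at all $i\in[k,j)$; $\varphi\,\mathsf{R}_I\,\psi$: for all $j\in[k,\lambda)$ with $\tau(j)-\tau(k)\in I$, $\psi$ at $j$ or $\varphi$ at some $i\in[k,j)$. An $\mathrm{MHT}_f$-tautology is a formula satisfied at every $k\in[0,\lambda)$ of every timed HT-trace of finite length $\lambda$. $\sigma(\varphi)$ replaces each connective by its swapped-time version, the pairs being $\mathsf{U}_I/\mathsf{S}_I$, $\mathsf{R}_I/\mathsf{T}_I$, $\bigcirc_I/\bullet_I$, $\widehat{\bigcirc}_I/\widehat{\bullet}_I$,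 $\Box_I/\blacksquare_I$, and $\Diamond_I$ (i.e. $\top\,\mathsf{U}_I\,\cdot$) / eventually before ($\top\,\mathsf{S}_I\,\cdot$). *)

(* Defs.v *)
From Stdlib Require Import Arith.

(* Intervals J = [m, n) with m : nat and n : nat ∪ {ω}; ω is encoded by None. *)
Record interval := Itv { itv_lo : nat ; itv_hi : option nat }.

Definition in_itv (J : interval) (d : nat) : Prop :=
  itv_lo J <= d /\ match itv_hi J with None => True | Some n => d < n end.

Inductive formula (A : Type) : Type :=
| Atom  : A -> formula A
| Bot   : formula A
| Impl  : formula A -> formula A -> formula A
| And   : formula A -> formula A -> formula A
| Or    : formula A -> formula A -> formula A
| Prev  : interval -> formula A -> formula A
| Since : interval -> formula A -> formula A -> formula A
| Trig  : interval -> formula A -> formula A -> formula A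
| Next  : interval -> formula A -> formula A
| Until : interval -> formula A -> formula A -> formula A
| Rel   : interval -> formula A -> formula A -> formula A.

Arguments Atom {A} _.
Arguments Bot {A}.
Arguments Impl {A} _ _.
Arguments And {A} _ _.
Arguments Or {A} _ _.
Arguments Prev {A} _ _.
Arguments Since {A} _ _ _.
Arguments Trig {A} _ _ _.
Arguments Next {A} _ _.
Arguments Until {A} _ _ _.
Arguments Rel {A} _ _ _.

Definition Neg {A} (f : formula A) : formula A := Impl f Bot.
Definition Top {A} : formula A := Neg Bot.
Definition AlwaysBefore {A} J (f : formula A) : formula A := Trig J Bot f.
Definition EventuallyBefore {A} J (f : formula A) : formula A := Since J Top f.
Definition WeakPrev {A} J (f : formula A) : formula A := Or (Prev J f) (Neg (Prev J Top)).
Definition Always {A} J (f : formula A) : formula A := Rel J Bot f.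
Definition Eventually {A} J (f : formula A) : formula A := Until J Top f.
Definition WeakNext {A} J (f : formula A) : formula A := Or (Next J f) (Neg (Next J Top)).

(* Satisfaction at position k of the timed HT-trace (<H,T>, tau) of length lam.
   [H] is the "here" component currently in use; implication checks both
   <H,T> and <T,T>. *)
Fixpoint sat {A : Type} (lam : nat) (tau : nat -> nat) (H T : nat -> A -> Prop)
         (k : nat) (f : formula A) {struct f} : Prop :=
  match f with
  | Atom p => H k p
  | Bot => False
  | Impl f1 f2 =>
      (sat lam tau H T k f1 -> sat lam tau H T k f2) /\
      (sat lam tau T T k f1 -> sat lam tau T T k f2)
  | And f1 f2 => sat lam tau H T k f1 /\ sat lam tau H T k f2
  | Or f1 f2 => sat lam tau H T k f1 \/ sat lam tau H T k f2
  | Prev J g => 0 < k /\ sat lam tau H T (k - 1) g /\ in_itv J (tau k - tau (k - 1))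
  | Since J f1 f2 =>
      exists j, j <= k /\ in_itv J (tau k - tau j) /\ sat lam tau H T j f2 /\
        (forall i, j < i -> i <= k -> sat lam tau H T i f1)
  | Trig J f1 f2 =>
      forall j, j <= k -> in_itv J (tau k - tau j) ->
        sat lam tau H T j f2 \/ (exists i, j < i /\ i <= k /\ sat lam tau H T i f1)
  | Next J g => k + 1 < lam /\ sat lam tau H T (k + 1) g /\ in_itv J (tau (k + 1) - tau k)
  | Until J f1 f2 =>
      exists j, k <= j /\ j < lam /\ in_itv J (tau j - tau k) /\ sat lam tau H T j f2 /\
        (forall i, k <= i -> i < j -> sat lam tau H T i f1)
  | Rel J f1 f2 =>
      forall j, k <= j -> j < lam -> in_itv J (tau j - tau k) ->
        sat lam tau H T j f2 \/ (exists i, k <= i /\ i < j /\ sat lam tau H T i f1)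
  end.

(* A timed HT-trace of finite length lam: H_i ⊆ T_i for i < lam, tau(0)=0,
   tau monotone on [0,lam). Values outside [0,lam) are irrelevant. *)
Definition timed_ht_trace {A : Type} (lam : nat) (tau : nat -> nat)
           (H T : nat -> A -> Prop) : Prop :=
  (forall i p, i < lam -> H i p -> T i p) /\
  tau 0 = 0 /\
  (forall i, i + 1 < lam -> tau i <= tau (i + 1)).

Definition MHTf_tautology {A : Type} (f : formula A) : Prop :=
  forall (lam : nat) (tau : nat -> nat) (H T : nat -> A -> Prop),
    timed_ht_trace lam tau H T -> forall k, k < lam -> sat lam tau H T k f.

Fixpoint sigma {A : Type} (f : formula A) : formula A :=
  match f with
  | Atom p => Atom p
  | Bot => Bot
  | Impl f1 f2 => Impl (sigma f1) (sigma f2)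
  | And f1 f2 => And (sigma f1) (sigma f2)
  | Or f1 f2 => Or (sigma f1) (sigma f2)
  | Prev J g => Next J (sigma g)
  | Since J f1 f2 => Until J (sigma f1) (sigma f2)
  | Trig J f1 f2 => Rel J (sigma f1) (sigma f2)
  | Next J g => Prev J (sigma g)
  | Until J f1 f2 => Since J (sigma f1) (sigma f2)
  | Rel J f1 f2 => Trig J (sigma f1) (sigma f2)
  end.

(* Main.v *)
Require Import Defs.
From Stdlib Require Import Arith Lia.

Lemma sigma_invol {A} (f : formula A) : sigma (sigma f) = f.
Proof. induction f; simpl; congruence. Qed.

Section Rev.
Variable A : Type.
Variable lam : nat.
Variable tau : nat -> nat.
Hypothesis mono : forall i j, i <= j -> j < lam -> tau i <= tau j.

Definition taur (i : nat) := tau (lam - 1) - tau (lam - 1 - i).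
Definition rv (H : nat -> A -> Prop) := fun i => H (lam - 1 - i).

Lemma dt a b c d : a <= b -> b < lam -> a + c = lam - 1 -> b + d = lam - 1 ->
  taur b - taur a = tau c - tau d.
Proof.
  intros. unfold taur.
  replace (lam - 1 - b) with d by lia. replace (lam - 1 - a) with c by lia.
  assert (tau d <= tau c) by (apply mono; lia).
  assert (tau c <= tau (lam - 1)) by (apply mono; lia).
  lia.
Qed.

Lemma part1 (f : formula A) : forall H T k m, k < lam -> k + m = lam - 1 ->
  (sat lam taur (rv H) (rv T) k (sigma f) <-> sat lam tau H T m f).
Proof.
  induction f; intros H T k m Hk Hkm; simpl.
  - unfold rv. replace (lam - 1 - k) with m by lia. tauto.
  - tauto.
  - rewrite (IHf1 H T k m) by lia. rewrite (IHf2 H T k m) by lia. rewrite (IHf1 T T k m) by lia. rewrite (IHf2 T T k m) by lia. tauto.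
  - rewrite (IHf1 H T k m), (IHf2 H T k m) by lia. tauto.
  - rewrite (IHf1 H T k m), (IHf2 H T k m) by lia. tauto.
  -
    split.
    + intros [h1 [h2 h3]]. rewrite (IHf H T (k+1) (m-1)) in h2 by lia.
      rewrite (dt k (k+1) m (m-1)) in h3 by lia. refine (conj _ (conj h2 h3)); lia.
    + intros [h1 [h2 h3]]. rewrite <- (IHf H T (k+1) (m-1)) in h2 by lia.
      rewrite <- (dt k (k+1) m (m-1)) in h3 by lia. refine (conj _ (conj h2 h3)); lia.
  -
    split.
    + intros [j [h1 [h2 [h3 [h4 h5]]]]].
      exists (lam - 1 - j). rewrite (dt k j m (lam - 1 - j)) in h3 by lia.
      rewrite (IHf2 H T j (lam - 1 - j)) in h4 by lia.
      refine (conj _ (conj h3 (conj h4 _))); [lia|].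
      intros x hi1 hi2. rewrite <- (IHf1 H T (lam - 1 - x) x) by lia.
      apply h5; lia.
    + intros [j [h1 [h2 [h3 h4]]]].
      exists (lam - 1 - j). rewrite (dt k (lam - 1 - j) m j) by lia.
      rewrite (IHf2 H T (lam - 1 - j) j) by lia.
      refine (conj _ (conj _ (conj h2 (conj h3 _)))); [lia|lia|].
      intros x hi1 hi2. rewrite (IHf1 H T x (lam - 1 - x)) by lia.
      apply h4; lia.
  -
    split.
    + intros h j hj1 hj2.
      rewrite <- (dt k (lam - 1 - j) m j) in hj2 by lia.
      destruct (h (lam - 1 - j)) as [h' | [x [hi1 [hi2 hi3]]]]; try lia; auto.
      * left. rewrite <- (IHf2 H T (lam - 1 - j) j) by lia. exact h'.
      * right. exists (lam - 1 - x). refine (conj _ (conj _ _)); [lia|lia|].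
        rewrite <- (IHf1 H T x (lam - 1 - x)) by lia. exact hi3.
    + intros h j hj1 hj2 hj3.
      rewrite (dt k j m (lam - 1 - j)) in hj3 by lia.
      destruct (h (lam - 1 - j)) as [h' | [x [hi1 [hi2 hi3]]]]; try lia; auto.
      * left. rewrite (IHf2 H T j (lam - 1 - j)) by lia. exact h'.
      * right. exists (lam - 1 - x). refine (conj _ (conj _ _)); [lia|lia|].
        rewrite (IHf1 H T (lam - 1 - x) x) by lia. exact hi3.
  -
    split.
    + intros [h1 [h2 h3]]. rewrite (IHf H T (k-1) (m+1)) in h2 by lia.
      rewrite (dt (k-1) k (m+1) m) in h3 by lia. refine (conj _ (conj h2 h3)); lia.
    + intros [h1 [h2 h3]]. rewrite <- (IHf H T (k-1) (m+1)) in h2 by lia.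
      rewrite <- (dt (k-1) k (m+1) m) in h3 by lia. refine (conj _ (conj h2 h3)); lia.
  -
    split.
    + intros [j [h1 [h2 [h3 h4]]]].
      exists (lam - 1 - j). rewrite (dt j k (lam - 1 - j) m) in h2 by lia.
      rewrite (IHf2 H T j (lam - 1 - j)) in h3 by lia.
      refine (conj _ (conj _ (conj h2 (conj h3 _)))); [lia|lia|].
      intros x hi1 hi2. rewrite <- (IHf1 H T (lam - 1 - x) x) by lia.
      apply h4; lia.
    + intros [j [h1 [h2 [h3 [h4 h5]]]]].
      exists (lam - 1 - j). rewrite (dt (lam - 1 - j) k j m) by lia.
      rewrite (IHf2 H T (lam - 1 - j) j) by lia.
      refine (conj _ (conj h3 (conj h4 _))); [lia|].
      intros x hi1 hi2. rewrite (IHf1 H T x (lam - 1 - x)) by lia.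
      apply h5; lia.
  -
    split.
    + intros h j hj1 hj2 hj3.
      rewrite <- (dt (lam - 1 - j) k j m) in hj3 by lia.
      destruct (h (lam - 1 - j)) as [h' | [x [hi1 [hi2 hi3]]]]; try lia; auto.
      * left. rewrite <- (IHf2 H T (lam - 1 - j) j) by lia. exact h'.
      * right. exists (lam - 1 - x). refine (conj _ (conj _ _)); [lia|lia|].
        rewrite <- (IHf1 H T x (lam - 1 - x)) by lia. exact hi3.
    + intros h j hj1 hj2.
      rewrite (dt j k (lam - 1 - j) m) in hj2 by lia.
      destruct (h (lam - 1 - j)) as [h' | [x [hi1 [hi2 hi3]]]]; try lia; auto.
      * left. rewrite (IHf2 H T j (lam - 1 - j)) by lia. exact h'.
      * right. exists (lam - 1 - x). refine (conj _ (conj _ _)); [lia|lia|].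
        rewrite (IHf1 H T (lam - 1 - x) x) by lia. exact hi3.
Qed.

Lemma part2 (f : formula A) : forall H T k m, k < lam -> k + m = lam - 1 ->
  (sat lam taur (rv H) (rv T) k f <-> sat lam tau H T m (sigma f)).
Proof.
  intros H T k m Hk Hkm. rewrite <- (part1 (sigma f) H T k m Hk Hkm). rewrite sigma_invol. tauto.
Qed.

End Rev.

Lemma mono_of {A} lam tau (H T : nat -> A -> Prop) : timed_ht_trace lam tau H T ->
  forall i j, i <= j -> j < lam -> tau i <= tau j.
Proof.
  intros [_ [_ Hs]] i j Hij. induction Hij; intros; auto.
  specialize (Hs m). rewrite Nat.add_1_r in Hs. assert (tau i <= tau m) by (apply IHHij; lia).
  specialize (Hs ltac:(lia)). lia.
Qed.

Lemma rev_trace {A} lam tau (H T : nat -> A -> Prop) : timed_ht_trace lam tau H T ->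
  timed_ht_trace lam (taur lam tau) (rv A lam H) (rv A lam T).
Proof.
  intros Ht. pose proof (mono_of _ _ _ _ Ht) as M. destruct Ht as [h1 [h2 h3]].
  unfold taur, rv. repeat split.
  - intros i p Hi Hp. apply h1; auto; lia.
  - rewrite Nat.sub_0_r. lia.
  - intros i Hi. assert (tau (lam - 1 - (i+1)) <= tau (lam - 1 - i)) by (apply M; lia).
    assert (tau (lam - 1 - i) <= tau (lam - 1)) by (apply M; lia). lia.
Qed.

Theorem theorem1 (A : Type) (phi : formula A) :
  MHTf_tautology phi <-> MHTf_tautology (sigma phi).
Proof.
  split; intros Hp lam tau H T Ht k Hk; pose proof (mono_of _ _ _ _ Ht) as M.
  - rewrite <- (part2 A lam tau M phi H T (lam - 1 - k) k) by lia.
    apply Hp; [apply rev_trace; auto | lia].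
  - rewrite <- (part1 A lam tau M phi H T (lam - 1 - k) k) by lia.
    apply Hp; [apply rev_trace; auto | lia].
Qed.
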